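(* Let the non-degeneracy, balanced communication and periodic strong connectivity assumptions hold, and let the positive step-sizes of the DLPDS algorithm satisfy $\lim_{k\to\infty}\alpha(k)=0$, $\sum_k\alpha(k)=+\infty$, $\sum_k\alpha(k)^2<+\infty$. Suppose $x^*\in X$ and $\mu^*\in M$ satisfy $\lim_{k\to\infty}x^{[i]}(k)=x^*$ and $\lim_{k\to\infty}\mu^{[i]}(k)=\mu^*$ for all $i\in V$. Then $(x^*,\mu^* )$ is a saddle point of $\mathcal{L}(x,\mu)=f(x)+N\mu^Tg(x)$ over $X\times M$, i.e. $\mathcal{L}(x^*,\mu)\le\mathcal{L}(x^*,\mu^* )\le\mathcal{L}(x,\mu^* )$ for all $x\in X$, $\mu\in M$.
   Context: Same setting and DLPDS algorithm as follows. Agents $V=\{1,\dots,N\}$; convex $f^{[i]}$, $f=\sum_if^{[i]}$; nonempty compact convex $X^{[i]}$, $X=\bigcap_iX^{[i]}$; $g:\mathbb{R}^n\to\mathbb{R}^m$ with convex components; $M^{[i]}=\{\mu\in\mathbb{R}^m_{\ge0}:\|\mu\|\le\rho_i\}$, $\rho_i>0$, $M=\bigcap_iM^{[i]}$; $\mathcal{L}^{[i]}(x,\mu)=f^{[i]}(x)+\mu^Tg(x)$. Weights $a^i_j(k)\ge0$ satisfying non-degeneracy ($a^i_i(k)\ge\eta>0$, $a^i_j(k)\in\{0\}\cup[\eta,1]$), double stochasticity, and periodic strong connectivity (union of edge sets $\{(j,i):j\neq i,a^i_j(k)>0\}$ over any $B$ consecutive times is strongly connected). Iteration: $v^{[i]}_x(k)=\sum_ja^i_j(k)x^{[j]}(k)$,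 $v^{[i]}_\mu(k)=\sum_ja^i_j(k)\mu^{[j]}(k)$, $x^{[i]}(k+1)=P_{X^{[i]}}[v^{[i]}_x(k)-\alpha(k)\mathcal{D}^{[i]}_x(k)]$, $\mu^{[i]}(k+1)=P_{M^{[i]}}[v^{[i]}_\mu(k)+\alpha(k)g(v^{[i]}_x(k))]$, with $x^{[i]}(0)\in X^{[i]}$, $\mu^{[i]}(0)\ge0$, and $\mathcal{D}^{[i]}_x(k)$ a subgradient of $\mathcal{L}^{[i]}(\cdot,v^{[i]}_\mu(k))$ at $v^{[i]}_x(k)$. *)

(* Defs.v *)
From Stdlib Require Import Reals Lra.
Open Scope R_scope.

(* Vectors of R^d are represented as functions nat -> R whose coordinates
   of index >= d vanish; agents are indexed by 0..N-1. *)
Definition vec := nat -> R.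

Fixpoint fsum (n : nat) (f : nat -> R) : R :=
  match n with
  | O => 0
  | S p => fsum p f + f p
  end.

Definition is_dim (d : nat) (x : vec) : Prop := forall k, (d <= k)%nat -> x k = 0.

Definition vadd (x y : vec) : vec := fun k => x k + y k.
Definition vsub (x y : vec) : vec := fun k => x k - y k.
Definition vscal (a : R) (x : vec) : vec := fun k => a * x k.
Definition dot (d : nat) (x y : vec) : R := fsum d (fun k => x k * y k).
Definition vnorm (d : nat) (x : vec) : R := sqrt (dot d x x).

Definition vcomb (N : nat) (w : nat -> R) (xs : nat -> vec) : vec :=
  fun k => fsum N (fun j => w j * xs j k).

Definition convex_fun (d : nat) (f : vec -> R) : Prop :=
  forall x y t, is_dim d x -> is_dim d y -> 0 <= t <= 1 ->
    f (vadd (vscal t x) (vscal (1 - t) y)) <= t * f x + (1 - t) * f y.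

Definition convex_set (d : nat) (C : vec -> Prop) : Prop :=
  forall x y t, C x -> C y -> 0 <= t <= 1 -> C (vadd (vscal t x) (vscal (1 - t) y)).

Definition closed_set (d : nat) (C : vec -> Prop) : Prop :=
  forall (u : nat -> vec) (l : vec), (forall k, C (u k)) -> is_dim d l ->
    Un_cv (fun k => vnorm d (vsub (u k) l)) 0 -> C l.

Definition bounded_set (d : nat) (C : vec -> Prop) : Prop :=
  exists B, forall x, C x -> vnorm d x <= B.

Definition ne_compact_convex (d : nat) (C : vec -> Prop) : Prop :=
  (forall x, C x -> is_dim d x) /\ (exists x, C x) /\
  closed_set d C /\ bounded_set d C /\ convex_set d C.

Definition is_proj (d : nat) (C : vec -> Prop) (w p : vec) : Prop :=
  C p /\ forall y, C y -> vnorm d (vsub p w) <= vnorm d (vsub y w).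

Definition is_subgrad (d : nat) (h : vec -> R) (x D : vec) : Prop :=
  forall y, is_dim d y -> h y >= h x + dot d D (vsub y x).

Definition Mball (m : nat) (rho : R) (mu : vec) : Prop :=
  is_dim m mu /\ (forall k, (k < m)%nat -> 0 <= mu k) /\ vnorm m mu <= rho.

Inductive reach (E : nat -> nat -> Prop) : nat -> nat -> Prop :=
  | reach_refl : forall u, reach E u u
  | reach_step : forall u v w, E u v -> reach E v w -> reach E u w.

Definition strongly_connected (N : nat) (E : nat -> nat -> Prop) : Prop :=
  forall u v, (u < N)%nat -> (v < N)%nat -> reach E u v.

(* Weights a k i j = a^i_j(k). Edge (j,i) of the union graph over times
   k0, ..., k0+B-1. *)
Definition union_edges (N : nat) (a : nat -> nat -> nat -> R) (k0 B : nat)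
  (j i : nat) : Prop :=
  (j < N)%nat /\ (i < N)%nat /\ j <> i /\
  exists k, (k0 <= k < k0 + B)%nat /\ a k i j > 0.

Definition Lag (N n m : nat) (f : nat -> vec -> R) (g : vec -> vec) (x mu : vec) : R :=
  fsum N (fun i => f i x) + INR N * dot m mu (g x).

(* Main.v *)
Require Import Defs.
From Stdlib Require Import Reals.
From Stdlib Require Import Lia Psatz FunctionalExtensionality Classical Lra.
Open Scope R_scope.

Lemma sqnn (x : R) : 0 <= x * x.
Proof. apply Rle_0_sqr. Qed.

Lemma fsum_ext n f g0 : (forall l, (l < n)%nat -> f l = g0 l) -> fsum n f = fsum n g0.
Proof. induction n; simpl; intros H; auto. rewrite IHn by (intros; apply H; lia). rewrite H by lia; auto. Qed.

Lemma fsum_le n f g0 : (forall l, (l < n)%nat -> f l <= g0 l) -> fsum n f <= fsum n g0.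
Proof. induction n; simpl; intros H. lra. assert (f n <= g0 n) by (apply H; lia).
 assert (fsum n f <= fsum n g0) by (apply IHn; intros; apply H; lia). lra. Qed.

Lemma fsum_plus n f g0 : fsum n (fun l => f l + g0 l) = fsum n f + fsum n g0.
Proof. induction n; simpl; lra. Qed.

Lemma fsum_scal n c f : fsum n (fun l => c * f l) = c * fsum n f.
Proof. induction n; simpl. ring. rewrite IHn; ring. Qed.

Lemma fsum_opp n f : fsum n (fun l => - f l) = - fsum n f.
Proof. induction n; simpl. ring. rewrite IHn; ring. Qed.

Lemma fsum_minus n f g0 : fsum n (fun l => f l - g0 l) = fsum n f - fsum n g0.
Proof. induction n; simpl. ring. rewrite IHn; ring. Qed.

Lemma fsum_const n c : fsum n (fun _ => c) = INR n * c.
Proof. induction n; simpl fsum. simpl; ring. rewrite IHn, S_INR; ring. Qed.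

Lemma fsum_nonneg n f : (forall l, (l < n)%nat -> 0 <= f l) -> 0 <= fsum n f.
Proof. intros H. replace 0 with (fsum n (fun _ => 0)). apply fsum_le; auto.
 rewrite fsum_const; ring. Qed.

Lemma fsum_ge_term n f l : (forall l, (l < n)%nat -> 0 <= f l) -> (l < n)%nat -> f l <= fsum n f.
Proof. induction n; intros H Hl. lia. simpl.
 destruct (Nat.eq_dec l n). subst. assert (0 <= fsum n f) by (apply fsum_nonneg; intros; apply H; lia). lra.
 assert (f l <= fsum n f) by (apply IHn; [intros; apply H; lia| lia]). assert (0 <= f n) by (apply H; lia). lra. Qed.

Lemma fsum_zero_inv n f l : (forall l, (l < n)%nat -> 0 <= f l) -> fsum n f = 0 -> (l < n)%nat -> f l = 0.
Proof. intros H H0 Hl. assert (f l <= fsum n f) by (apply fsum_ge_term; auto). assert (0 <= f l) by auto. lra. Qed.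

Lemma fsum_abs n f : Rabs (fsum n f) <= fsum n (fun l => Rabs (f l)).
Proof. induction n; simpl. rewrite Rabs_R0; lra. eapply Rle_trans. apply Rabs_triang. lra. Qed.

Lemma fsum_exchange N M (F : nat -> nat -> R) :
  fsum N (fun i => fsum M (fun j => F i j)) = fsum M (fun j => fsum N (fun i => F i j)).
Proof. induction N; simpl. induction M; simpl; lra. rewrite IHN, <- fsum_plus. reflexivity. Qed.

Lemma fsum_single n l c : (l < n)%nat ->
  fsum n (fun k => if Nat.eq_dec k l then c k else 0) = c l.
Proof. induction n; intros Hl. lia. simpl. destruct (Nat.eq_dec n l).
 subst. rewrite (fsum_ext _ _ (fun _ => 0)). rewrite fsum_const; ring.
 intros. destruct (Nat.eq_dec l0 l); auto; lia.
 rewrite IHn by lia. ring. Qed.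

Lemma fsum_zero n : fsum n (fun _ => 0) = 0.
Proof. rewrite fsum_const; ring. Qed.

Lemma rabs_inv a b : Rabs a <= b -> - b <= a <= b.
Proof. intros H. assert (a <= Rabs a) by apply Rle_abs. assert (- a <= Rabs (-a)) by apply Rle_abs.
  rewrite Rabs_Ropp in H1. lra. Qed.


Lemma cv_const c : Un_cv (fun _ => c) c.
Proof. intros e He. exists 0%nat. intros. unfold R_dist. rewrite Rminus_diag, Rabs_R0; lra. Qed.

Lemma cv_ext u v l : (forall k, u k = v k) -> Un_cv u l -> Un_cv v l.
Proof. intros H Hu e He. destruct (Hu e He) as [K HK]. exists K. intros. rewrite <- H. auto. Qed.

Lemma cv_ext_ev u v l K0 : (forall k, (K0 <= k)%nat -> u k = v k) -> Un_cv u l -> Un_cv v l.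
Proof. intros H Hu e He. destruct (Hu e He) as [K HK]. exists (max K K0). intros.
 rewrite <- H by lia. apply HK; lia. Qed.

Lemma cv_fsum N (u : nat -> nat -> R) (l : nat -> R) :
  (forall i, (i < N)%nat -> Un_cv (u i) (l i)) ->
  Un_cv (fun k => fsum N (fun i => u i k)) (fsum N l).
Proof. induction N; intros H; simpl. apply cv_const.
 apply CV_plus. apply IHN; intros; apply H; lia. apply H; lia. Qed.

Lemma cv_squeeze u l w : (forall k, Rabs (u k - l) <= w k) -> Un_cv w 0 -> Un_cv u l.
Proof. intros H Hw e He. destruct (Hw e He) as [K HK]. exists K. intros k Hk.
 specialize (HK k Hk). unfold R_dist in *. rewrite Rminus_0_r in HK. specialize (H k).
 eapply Rle_lt_trans. apply H. eapply Rle_lt_trans. apply Rle_abs. auto. Qed.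

Lemma cv_squeeze_ev u l w K0 : (forall k, (K0 <= k)%nat -> Rabs (u k - l) <= w k) -> Un_cv w 0 -> Un_cv u l.
Proof. intros H Hw e He. destruct (Hw e He) as [K HK]. exists (max K K0). intros k Hk.
 specialize (HK k ltac:(lia)). unfold R_dist in *. rewrite Rminus_0_r in HK. specialize (H k ltac:(lia)).
 eapply Rle_lt_trans. apply H. eapply Rle_lt_trans. apply Rle_abs. auto. Qed.

Lemma cv_abs0 u : Un_cv u 0 -> Un_cv (fun k => Rabs (u k)) 0.
Proof. intros H e He. destruct (H e He) as [K HK]. exists K. intros k Hk. specialize (HK k Hk).
 unfold R_dist in *. rewrite Rminus_0_r in *. rewrite Rabs_Rabsolu. auto. Qed.

Lemma cv_sub0 u l : Un_cv u l -> Un_cv (fun k => u k - l) 0.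
Proof. intros H e He. destruct (H e He) as [K HK]. exists K. intros k Hk. specialize (HK k Hk).
 unfold R_dist in *. rewrite Rminus_0_r. auto. Qed.

Lemma cv_from0 u l : Un_cv (fun k => u k - l) 0 -> Un_cv u l.
Proof. intros H e He. destruct (H e He) as [K HK]. exists K. intros k Hk. specialize (HK k Hk).
 unfold R_dist in *. rewrite Rminus_0_r in HK. auto. Qed.

Lemma cv_ev_le u l e : Un_cv u l -> 0 < e -> exists K, forall k, (K <= k)%nat -> Rabs (u k - l) <= e.
Proof. intros H He. destruct (H e He) as [K HK]. exists K. intros. left. apply HK; auto. Qed.

Lemma ev_forall m (P : nat -> nat -> Prop) :
  (forall l, (l < m)%nat -> exists K, forall k, (K <= k)%nat -> P l k) ->
  exists K, forall l, (l < m)%nat -> forall k, (K <= k)%nat -> P l k.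
Proof. induction m; intros H. exists 0%nat. intros; lia.
 destruct IHm as [K1 H1]. intros; apply H; lia. destruct (H m ltac:(lia)) as [K2 H2].
 exists (max K1 K2). intros l Hl k Hk. destruct (Nat.eq_dec l m). subst; apply H2; lia. apply H1; lia. Qed.

Lemma cv_bounded_null u w Bd K0 : Un_cv u 0 -> (forall k, (K0 <= k)%nat -> Rabs (w k) <= Bd) ->
  Un_cv (fun k => u k * w k) 0.
Proof. intros Hu Hw. apply cv_squeeze_ev with (w := fun k => Rabs (u k) * Bd) (K0 := K0).
 intros k Hk. rewrite Rminus_0_r, Rabs_mult. apply Rmult_le_compat_l. apply Rabs_pos. auto.
 replace 0 with (0 * Bd) by ring. apply CV_mult. apply cv_abs0; auto. apply cv_const. Qed.


Lemma fsum_quad d u v t : fsum d (fun l => (u l + t * v l) * (u l + t * v l)) =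
  fsum d (fun l => u l * u l) + 2 * t * fsum d (fun l => u l * v l) + t * t * fsum d (fun l => v l * v l).
Proof. induction d; simpl. ring. rewrite IHd. ring. Qed.

Lemma dot_nonneg d u : 0 <= dot d u u.
Proof. unfold dot. apply fsum_nonneg. intros. apply sqnn. Qed.

Lemma coord_le_vnorm d u l : (l < d)%nat -> Rabs (u l) <= vnorm d u.
Proof. intros Hl. unfold vnorm. rewrite <- sqrt_Rsqr_abs. apply sqrt_le_1. apply Rle_0_sqr.
 apply dot_nonneg. unfold dot, Rsqr. apply (fsum_ge_term d (fun k => u k * u k)); auto. intros; nra. Qed.

Lemma vnorm_le_dot d u w : vnorm d u <= vnorm d w -> dot d u u <= dot d w w.
Proof. intros H. apply sqrt_le_0; auto; apply dot_nonneg. Qed.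

Lemma proj_ineq d C w p y : convex_set d C -> is_proj d C w p -> C y ->
  dot d (vsub p y) (vsub p y) <= dot d (vsub w y) (vsub w y).
Proof.
  intros HC [Hp Hmin] Hy.
  set (A := fsum d (fun l => (p l - w l) * (y l - p l))).
  set (Bq := fsum d (fun l => (y l - p l) * (y l - p l))).
  set (P := fsum d (fun l => (p l - w l) * (p l - w l))).
  assert (HB : 0 <= Bq) by (apply fsum_nonneg; intros; cbv beta; apply sqnn).
  assert (Ht : forall t, 0 < t <= 1 -> 0 <= 2 * t * A + t * t * Bq).
  { intros t Ht. assert (Hq := HC y p t Hy Hp ltac:(lra)).
    specialize (Hmin _ Hq). apply vnorm_le_dot in Hmin.
    unfold dot, vsub, vadd, vscal in Hmin.
    rewrite (fsum_ext d (fun k => (t * y k + (1 - t) * p k - w k) * (t * y k + (1 - t) * p k - w k)) (fun l => ((p l - w l) + t * (y l - p l)) * ((p l - w l) + t * (y l - p l)))) in Hmin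
      by (intros; cbv beta; ring).
    rewrite fsum_quad in Hmin. fold A Bq P in Hmin. unfold P in Hmin. lra. }
  assert (HA : 0 <= A).
  { destruct (Rle_dec 0 A); auto. exfalso.
    destruct (Rle_dec Bq 0). specialize (Ht 1 ltac:(lra)). nra.
    set (t := Rmin 1 (- A / Bq)).
    assert (0 < t <= 1). { unfold t. split. apply Rmin_glb_lt. lra. apply Rdiv_lt_0_compat; lra. apply Rmin_l. }
    assert (t * Bq <= - A). { assert (t <= -A/Bq) by apply Rmin_r. apply Rmult_le_compat_r with (r:=Bq) in H0; [|lra].
      unfold Rdiv in H0. rewrite Rmult_assoc, Rinv_l in H0; lra. }
    specialize (Ht t H). nra. }
  unfold dot, vsub.
  rewrite (fsum_ext d (fun k => (w k - y k) * (w k - y k)) (fun l => ((p l - y l) + 1 * (w l - p l)) * ((p l - y l) + 1 * (w l - p l))))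
      by (intros; cbv beta; ring).
  rewrite fsum_quad.
  rewrite (fsum_ext d (fun l => (p l - y l) * (w l - p l)) (fun l => (p l - w l) * (y l - p l))) by (intros; cbv beta; ring).
  fold A. assert (0 <= fsum d (fun l => (w l - p l) * (w l - p l))) by (apply fsum_nonneg; intros; cbv beta; apply sqnn). nra.
Qed.

Lemma Mball_convex m r : convex_set m (Mball m r).
Proof.
  intros u v t [Hu1 [Hu2 Hu3]] [Hv1 [Hv2 Hv3]] Ht. unfold vadd, vscal. split; [|split].
  - intros k Hk. rewrite Hu1, Hv1 by auto. ring.
  - intros k Hk. specialize (Hu2 k Hk). specialize (Hv2 k Hk). nra.
  - assert (Hr : 0 <= r) by (eapply Rle_trans; [apply sqrt_pos | apply Hu3]).
    unfold vnorm. rewrite <- (sqrt_Rsqr r) by auto. apply sqrt_le_1. apply dot_nonneg. apply Rle_0_sqr.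
    apply Rle_trans with (t * dot m u u + (1 - t) * dot m v v).
    + unfold dot. rewrite <- !fsum_scal, <- fsum_plus. apply fsum_le. intros l _; cbv beta.
      assert (0 <= t * (1-t) * ((u l - v l) * (u l - v l))). { apply Rmult_le_pos. nra. apply sqnn. }
      assert (t * (u l * u l) + (1 - t) * (v l * v l) - (t * u l + (1 - t) * v l) * (t * u l + (1 - t) * v l) = t * (1-t) * ((u l - v l) * (u l - v l))) by ring.
      lra.
    + assert (dot m u u <= Rsqr r). { unfold vnorm in Hu3. rewrite <- (sqrt_Rsqr r) in Hu3 by auto. apply sqrt_le_0 in Hu3; auto. apply dot_nonneg. apply Rle_0_sqr. }
      assert (dot m v v <= Rsqr r). { unfold vnorm in Hv3. rewrite <- (sqrt_Rsqr r) in Hv3 by auto. apply sqrt_le_0 in Hv3; auto. apply dot_nonneg. apply Rle_0_sqr. }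
      nra.
Qed.


Lemma fsum_wsq N (c z : nat -> R) M :
  fsum N (fun j => c j * ((z j - M) * (z j - M))) =
  fsum N (fun j => c j * (z j * z j)) - 2 * M * fsum N (fun j => c j * z j) + M * M * fsum N c.
Proof. induction N; simpl. ring. rewrite IHN. ring. Qed.

Lemma jensen_sq N (c z : nat -> R) : (forall j, (j < N)%nat -> 0 <= c j) -> fsum N c = 1 ->
  fsum N (fun j => c j * z j) * fsum N (fun j => c j * z j) <= fsum N (fun j => c j * (z j * z j)).
Proof. intros Hc H1. set (M := fsum N (fun j => c j * z j)).
  assert (0 <= fsum N (fun j => c j * ((z j - M) * (z j - M)))).
  { apply fsum_nonneg. intros. apply Rmult_le_pos. auto. apply sqnn. }
  rewrite fsum_wsq, H1 in H. fold M in H. lra. Qed.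

Lemma vcomb_sub N w xs (y : vec) l : fsum N w = 1 ->
  vcomb N w xs l - y l = fsum N (fun j => w j * (xs j l - y l)).
Proof. intros H. unfold vcomb. rewrite (fsum_ext N (fun j => w j * (xs j l - y l)) (fun j => w j * xs j l - y l * w j))
  by (intros; cbv beta; ring). rewrite fsum_minus, fsum_scal, H. ring. Qed.

Lemma avg_ineq N d (w : nat -> nat -> R) (xs : nat -> vec) (y : vec) :
  (forall i j, (i < N)%nat -> (j < N)%nat -> 0 <= w i j) ->
  (forall i, (i < N)%nat -> fsum N (w i) = 1) ->
  (forall j, (j < N)%nat -> fsum N (fun i => w i j) = 1) ->
  fsum N (fun i => dot d (vsub (vcomb N (w i) xs) y) (vsub (vcomb N (w i) xs) y)) <=
  fsum N (fun j => dot d (vsub (xs j) y) (vsub (xs j) y)).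
Proof.
  intros Hw Hr Hc. unfold dot, vsub.
  apply Rle_trans with (fsum N (fun i => fsum d (fun l => fsum N (fun j => w i j * ((xs j l - y l) * (xs j l - y l)))))).
  - apply fsum_le. intros i Hi. apply fsum_le. intros l Hl.
    rewrite vcomb_sub by auto. apply jensen_sq; auto.
  - rewrite fsum_exchange. rewrite (fsum_exchange N d). apply Req_le. apply fsum_ext. intros l Hl.
    rewrite fsum_exchange. apply fsum_ext. intros j Hj.
    rewrite (fsum_ext N (fun i => w i j * ((xs j l - y l) * (xs j l - y l))) (fun i => ((xs j l - y l) * (xs j l - y l)) * w i j))
      by (intros; cbv beta; ring).
    rewrite fsum_scal, Hc by auto. ring.
Qed.

Lemma vcomb_close N w xs (c : vec) l : (forall j, (j < N)%nat -> 0 <= w j <= 1) -> fsum N w = 1 ->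
  Rabs (vcomb N w xs l - c l) <= fsum N (fun j => Rabs (xs j l - c l)).
Proof. intros Hw H1. rewrite vcomb_sub by auto. eapply Rle_trans. apply fsum_abs. apply fsum_le.
  intros j Hj. rewrite Rabs_mult. specialize (Hw j Hj). rewrite (Rabs_right (w j)) by lra.
  assert (0 <= Rabs (xs j l - c l)) by apply Rabs_pos. nra. Qed.

Lemma vcomb_dim N d w xs : (forall j, (j < N)%nat -> is_dim d (xs j)) -> is_dim d (vcomb N w xs).
Proof. intros H k Hk. unfold vcomb. rewrite (fsum_ext N _ (fun _ => 0)). apply fsum_zero.
  intros j Hj. cbv beta. rewrite H by auto. ring. Qed.

Lemma vcomb_cv N (w : nat -> nat -> R) (xs : nat -> nat -> vec) (c : vec) l :
  (forall k j, (j < N)%nat -> 0 <= w k j <= 1) -> (forall k, fsum N (w k) = 1) ->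
  (forall j, (j < N)%nat -> Un_cv (fun k => xs j k l) (c l)) ->
  Un_cv (fun k => vcomb N (w k) (fun j => xs j k) l) (c l).
Proof. intros Hw H1 Hx. apply cv_squeeze with (w := fun k => fsum N (fun j => Rabs (xs j k l - c l))).
  intros k. apply vcomb_close; auto.
  replace 0 with (fsum N (fun _ => 0)) by apply fsum_zero. apply cv_fsum. intros j Hj.
  apply cv_abs0. apply cv_sub0. auto. Qed.


Definition l1 (d : nat) (u : vec) : R := fsum d (fun l => Rabs (u l)).
Definition ev (l : nat) : vec := fun k => if Nat.eq_dec k l then 1 else 0.

Fixpoint Kf (h : vec -> R) (c : vec) (p : nat) : R :=
  match p with
  | O => 0
  | S p => Rmax (Kf h c p) (Rmax (h (vadd c (ev p)) - h c) (h (vsub c (ev p)) - h c))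
  end.

Lemma Kf_nonneg h c p : 0 <= Kf h c p.
Proof. induction p; simpl. lra. eapply Rle_trans; [apply IHp| apply Rmax_l]. Qed.

Lemma Kf_mono h c p : Kf h c p <= Kf h c (S p).
Proof. simpl. apply Rmax_l. Qed.

Lemma Kf_mono' h c p q : (p <= q)%nat -> Kf h c p <= Kf h c q.
Proof. induction 1. lra. eapply Rle_trans. apply IHle. apply Kf_mono. Qed.

Lemma Kf_ge h c p l : (l < p)%nat ->
  h (vadd c (ev l)) - h c <= Kf h c p /\ h (vsub c (ev l)) - h c <= Kf h c p.
Proof. intros Hl. assert (Kf h c (S l) <= Kf h c p) by (apply Kf_mono'; lia).
  simpl in H. assert (H1 := Rmax_r (Kf h c l) (Rmax (h (vadd c (ev l)) - h c) (h (vsub c (ev l)) - h c))).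
  assert (H2 := Rmax_l (h (vadd c (ev l)) - h c) (h (vsub c (ev l)) - h c)).
  assert (H3 := Rmax_r (h (vadd c (ev l)) - h c) (h (vsub c (ev l)) - h c)). split; lra. Qed.

Lemma l1_nonneg d u : 0 <= l1 d u.
Proof. unfold l1. apply fsum_nonneg. intros; apply Rabs_pos. Qed.

Lemma cvx_1d n h c l s p : convex_fun n h -> is_dim n c -> (l < n)%nat -> (l < p)%nat -> Rabs s <= 1 ->
  h (fun k => c k + s * ev l k) <= h c + Rabs s * Kf h c p.
Proof.
  intros Hh Hc Hl Hp Hs.
  set (t := Rabs s).
  assert (Ht : 0 <= t <= 1) by (split; [apply Rabs_pos | auto]).
  destruct (Kf_ge h c p l Hp) as [K1 K2].
  destruct (Rle_dec 0 s).
  - replace (fun k => c k + s * ev l k) with (vadd (vscal t (vadd c (ev l))) (vscal (1 - t) c)).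
    2:{ apply functional_extensionality. intros k. unfold t, vadd, vscal. rewrite Rabs_right by lra. ring. }
    eapply Rle_trans. apply Hh; auto.
    + intros k Hk. unfold vadd, ev. rewrite Hc by auto. destruct (Nat.eq_dec k l); [lia|ring].
    + assert (0 <= t * (Kf h c p - (h (vadd c (ev l)) - h c))) by (apply Rmult_le_pos; lra). nra.
  - replace (fun k => c k + s * ev l k) with (vadd (vscal t (vsub c (ev l))) (vscal (1 - t) c)).
    2:{ apply functional_extensionality. intros k. unfold t, vadd, vsub, vscal. rewrite Rabs_left by lra. ring. }
    eapply Rle_trans. apply Hh; auto.
    + intros k Hk. unfold vsub, ev. rewrite Hc by auto. destruct (Nat.eq_dec k l); [lia|ring].
    + assert (0 <= t * (Kf h c p - (h (vsub c (ev l)) - h c))) by (apply Rmult_le_pos; lra). nra.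
Qed.

Lemma cvx_up n h c : convex_fun n h -> is_dim n c -> forall n', (n' <= n)%nat ->
  forall w, is_dim n w -> (forall l, (n' <= l)%nat -> w l = c l) ->
  fsum n' (fun l => Rabs (w l - c l)) <= 1 ->
  h w <= h c + fsum n' (fun l => Rabs (w l - c l)) * Kf h c n'.
Proof.
  intros Hh Hc. induction n'; intros Hn w Hw Hwc Hl1.
  - simpl. replace w with c. lra. apply functional_extensionality. intros k. rewrite Hwc; auto; lia.
  - simpl in Hl1 |- *.
    set (a := fsum n' (fun l => Rabs (w l - c l))) in *.
    set (b := Rabs (w n' - c n')) in *.
    assert (Ha : 0 <= a) by (apply fsum_nonneg; intros; apply Rabs_pos).
    assert (Hb : 0 <= b) by apply Rabs_pos.
    assert (HK0 := Kf_nonneg h c n'). assert (HK1 := Kf_mono h c n'). simpl Kf in HK1 |- *.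
    set (KS := Rmax (Kf h c n') (Rmax (h (vadd c (ev n')) - h c) (h (vsub c (ev n')) - h c))) in *.
    destruct (Req_dec b 0) as [Hb0|Hb0].
    { assert (w n' = c n'). { unfold b in Hb0. destruct (Req_dec (w n' - c n') 0). lra.
        apply Rabs_no_R0 in H. contradiction. }
      assert (IH := IHn' ltac:(lia) w Hw ltac:(intros l Hl; destruct (Nat.eq_dec l n'); [subst; auto| apply Hwc; lia]) ltac:(fold a; lra)).
      fold a in IH. rewrite Hb0. assert (a * Kf h c n' <= a * KS) by (apply Rmult_le_compat_l; lra). lra. }
    set (beta := w n' - c n').
    destruct (Req_dec a 0) as [Ha0|Ha0].
    { assert (Hz : forall l, (l < n')%nat -> w l = c l).
      { intros l Hl. assert (Rabs (w l - c l) = 0).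
        { apply (fsum_zero_inv n' (fun l => Rabs (w l - c l))); auto. intros; apply Rabs_pos. }
        destruct (Req_dec (w l - c l) 0). lra. apply Rabs_no_R0 in H0. contradiction. }
      replace w with (fun k => c k + beta * ev n' k).
      2:{ apply functional_extensionality. intros k. unfold ev, beta. destruct (Nat.eq_dec k n'). subst; ring.
          destruct (Nat.lt_ge_cases k n'). rewrite (Hz k) by auto; ring. rewrite (Hwc k) by lia; ring. }
      eapply Rle_trans. apply (cvx_1d n h c n' beta (S n')); auto; try lia. unfold beta; fold b; lra.
      unfold beta; fold b. simpl Kf. fold KS. rewrite Ha0. lra. }
    assert (Ha' : 0 < a) by lra. assert (Hb' : 0 < b) by lra.
    set (lam := a / (a + b)).
    set (w' := fun k => if Nat.eq_dec k n' then c k else w k).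
    set (p := fun k => c k + ((a + b) / a) * (w' k - c k)).
    set (s := ((a + b) / b) * beta).
    set (q := fun k => c k + s * ev n' k).
    assert (Hdec : w = vadd (vscal lam p) (vscal (1 - lam) q)).
    { apply functional_extensionality. intros k. unfold vadd, vscal, p, q, w', ev, lam, s, beta.
      destruct (Nat.eq_dec k n'). subst. field. lra. field. lra. }
    assert (Hlam : 0 <= lam <= 1). { unfold lam. split. apply Rmult_le_pos; [lra|]. left; apply Rinv_0_lt_compat; lra.
      apply Rmult_le_reg_r with (a + b). lra. unfold Rdiv. rewrite Rmult_assoc, Rinv_l; lra. }
    assert (Hpd : is_dim n p). { intros k Hk. unfold p, w'. destruct (Nat.eq_dec k n'). lia. rewrite Hc, Hw by auto. ring. }
    assert (Hpc : forall l, (n' <= l)%nat -> p l = c l).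
    { intros l Hl. unfold p, w'. destruct (Nat.eq_dec l n'). ring. rewrite Hwc by lia. ring. }
    assert (Hpl : fsum n' (fun l => Rabs (p l - c l)) = a + b).
    { rewrite (fsum_ext n' _ (fun l => ((a + b) / a) * Rabs (w l - c l))).
      rewrite fsum_scal. fold a. field. lra.
      intros l Hl. unfold p, w'. destruct (Nat.eq_dec l n'). lia.
      replace (c l + (a + b) / a * (w l - c l) - c l) with ((a + b) / a * (w l - c l)) by ring.
      rewrite Rabs_mult. rewrite (Rabs_right ((a+b)/a)). auto. apply Rle_ge. apply Rmult_le_pos; [lra|]. left; apply Rinv_0_lt_compat; lra. }
    assert (IH := IHn' ltac:(lia) p Hpd Hpc ltac:(rewrite Hpl; lra)). rewrite Hpl in IH.
    assert (Hs : Rabs s = a + b). { unfold s, beta. rewrite Rabs_mult. fold b. rewrite (Rabs_right ((a+b)/b)). field. lra.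
      apply Rle_ge. apply Rmult_le_pos; [lra|]. left; apply Rinv_0_lt_compat; lra. }
    assert (Hq := cvx_1d n h c n' s (S n') Hh Hc ltac:(lia) ltac:(lia) ltac:(lra)).
    fold q in Hq. rewrite Hs in Hq. simpl Kf in Hq. fold KS in Hq.
    assert (Hqd : is_dim n q). { intros k Hk. unfold q, ev. rewrite Hc by auto. destruct (Nat.eq_dec k n'). lia. ring. }
    rewrite Hdec. eapply Rle_trans. apply Hh; auto.
    assert (lam * (a + b) * Kf h c n' <= lam * (a + b) * KS). { apply Rmult_le_compat_l; auto. nra. }
    nra.
Qed.

Lemma cvx_bound n h c : convex_fun n h -> is_dim n c -> exists K, 0 <= K /\
  forall w, is_dim n w -> l1 n (vsub w c) <= 1 -> Rabs (h w - h c) <= K * l1 n (vsub w c).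
Proof.
  intros Hh Hc. exists (Kf h c n). split. apply Kf_nonneg. intros w Hw Hl.
  assert (Hup : forall w, is_dim n w -> l1 n (vsub w c) <= 1 -> h w <= h c + l1 n (vsub w c) * Kf h c n).
  { intros w0 Hw0 Hl0. apply (cvx_up n h c Hh Hc n (le_n n) w0 Hw0); auto.
    intros l Hln. rewrite Hw0, Hc by auto. auto. }
  set (w2 := fun k => 2 * c k - w k).
  assert (Hw2 : is_dim n w2). { intros k Hk. unfold w2. rewrite Hw, Hc by auto. ring. }
  assert (Hl2 : l1 n (vsub w2 c) = l1 n (vsub w c)).
  { unfold l1. apply fsum_ext. intros l _. unfold vsub, w2. rewrite <- Rabs_Ropp. f_equal. ring. }
  assert (Hmid : c = vadd (vscal (1/2) w) (vscal (1 - 1/2) w2)).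
  { apply functional_extensionality. intros k. unfold vadd, vscal, w2. field. }
  assert (Hcv := Hh w w2 (1/2) Hw Hw2 ltac:(lra)). rewrite <- Hmid in Hcv.
  assert (H1 := Hup w Hw Hl). assert (H2 := Hup w2 Hw2 ltac:(lra)). rewrite Hl2 in H2.
  apply Rabs_le. split; nra.
Qed.

Lemma cvx_cont n h c (z : nat -> vec) : convex_fun n h -> is_dim n c -> (forall k, is_dim n (z k)) ->
  (forall l, (l < n)%nat -> Un_cv (fun k => z k l) (c l)) -> Un_cv (fun k => h (z k)) (h c).
Proof.
  intros Hh Hc Hz Hcv. destruct (cvx_bound n h c Hh Hc) as [K [HK HB]].
  assert (HL : Un_cv (fun k => l1 n (vsub (z k) c)) 0).
  { unfold l1, vsub. replace 0 with (fsum n (fun _ => 0)) by apply fsum_zero. apply cv_fsum.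
    intros l Hl. apply cv_abs0. apply cv_sub0. auto. }
  destruct (cv_ev_le _ _ 1 HL ltac:(lra)) as [K0 HK0].
  apply cv_squeeze_ev with (w := fun k => K * l1 n (vsub (z k) c)) (K0 := K0).
  intros k Hk. apply HB; auto. specialize (HK0 k Hk). rewrite Rminus_0_r in HK0. eapply Rle_trans. apply Rle_abs. auto.
  replace 0 with (K * 0) by ring. apply CV_mult. apply cv_const. auto.
Qed.

Lemma dot_ev n Dv l s : (l < n)%nat -> dot n Dv (fun k => s * ev l k) = s * Dv l.
Proof. intros Hl. unfold dot. rewrite (fsum_ext n _ (fun k => s * (if Nat.eq_dec k l then Dv k else 0))).
  rewrite fsum_scal, fsum_single; auto. intros k _. unfold ev. destruct (Nat.eq_dec k l); ring. Qed.

Lemma sg_bound n h c z Dv K : is_dim n c -> is_dim n z -> is_subgrad n h z Dv -> l1 n (vsub z c) <= 1/2 ->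
  (forall w, is_dim n w -> l1 n (vsub w c) <= 1 -> Rabs (h w - h c) <= K) ->
  forall l, (l < n)%nat -> Rabs (Dv l) <= 4 * K.
Proof.
  intros Hc Hz Hsg Hzc HB l Hl.
  set (s := if Rle_dec 0 (Dv l) then 1/2 else -1/2).
  assert (Hs : s * Dv l = Rabs (Dv l) / 2).
  { unfold s. destruct (Rle_dec 0 (Dv l)). rewrite Rabs_right by lra. field. rewrite Rabs_left by lra. field. }
  assert (Has : Rabs s = 1/2). { unfold s. destruct (Rle_dec 0 (Dv l)). rewrite Rabs_right; lra. rewrite Rabs_left; lra. }
  set (y := fun k => z k + s * ev l k).
  assert (Hy : is_dim n y). { intros k Hk. unfold y, ev. rewrite Hz by auto. destruct (Nat.eq_dec k l). lia. ring. }
  assert (Hyc : l1 n (vsub y c) <= 1).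
  { apply Rle_trans with (l1 n (vsub z c) + 1/2); [|lra]. unfold l1.
    rewrite <- (fsum_single n l (fun _ => 1/2)) by auto. rewrite <- fsum_plus. apply fsum_le. intros k _.
    unfold vsub, y, ev. destruct (Nat.eq_dec k l).
    - replace (z k + s * 1 - c k) with ((z k - c k) + s) by ring. eapply Rle_trans. apply Rabs_triang. lra.
    - replace (z k + s * 0 - c k) with (z k - c k) by ring. lra. }
  assert (H1 := Hsg y Hy). replace (vsub y z) with (fun k => s * ev l k) in H1.
  2:{ apply functional_extensionality; intros k; unfold vsub, y; ring. }
  rewrite dot_ev, Hs in H1 by auto.
  assert (H2 := HB y Hy Hyc). assert (H3 := HB z Hz ltac:(lra)).
  apply rabs_inv in H2. apply rabs_inv in H3. lra.
Qed.


Lemma sum_f_fsum u k : sum_f_R0 u k = fsum (S k) u.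
Proof. induction k; simpl. ring. rewrite IHk. simpl. ring. Qed.

Lemma lyap (V alpha e : nat -> R) el : (forall k, 0 <= V k) -> (forall k, 0 < alpha k) ->
  cv_infty (fun k => sum_f_R0 alpha k) -> Un_cv e el -> el < 0 ->
  (forall k, V (S k) <= V k + alpha k * e k) -> False.
Proof.
  intros HV Ha Hinf He Hel Hstep.
  destruct (cv_ev_le e el (- el / 2) He ltac:(lra)) as [K HK].
  assert (Hcl : forall j, V (K + j)%nat <= V K + (el / 2) * (fsum (K + j) alpha - fsum K alpha)).
  { induction j. rewrite Nat.add_0_r. lra.
    replace (K + S j)%nat with (S (K + j)) by lia. simpl fsum.
    assert (Hk := HK (K + j)%nat ltac:(lia)). apply rabs_inv in Hk.
    assert (alpha (K + j)%nat * e (K + j)%nat <= alpha (K+j)%nat * (el / 2)).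
    { apply Rmult_le_compat_l. left; auto. lra. }
    specialize (Hstep (K + j)%nat). lra. }
  destruct (Hinf (fsum K alpha + 2 * V K / (- el) + 1)) as [k0 Hk0].
  specialize (Hk0 (K + k0)%nat ltac:(lia)). rewrite sum_f_fsum in Hk0.
  specialize (Hcl (S k0)). replace (K + S k0)%nat with (S (K + k0)) in Hcl by lia.
  specialize (HV (S (K + k0))).
  assert (el / 2 * (fsum (S (K + k0)) alpha - fsum K alpha) < el / 2 * (2 * V K / (- el) + 1)).
  { apply Rmult_lt_gt_compat_neg_l. lra. lra. }
  replace (el / 2 * (2 * V K / - el + 1)) with (- V K + el / 2) in H by (field; lra).
  lra.
Qed.


Lemma fin_choice m (P : nat -> R -> Prop) :
  (forall l, (l < m)%nat -> exists K, P l K) -> exists Kf : nat -> R, forall l, (l < m)%nat -> P l (Kf l).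
Proof. induction m; intros H. exists (fun _ => 0). intros; lia.
  destruct IHm as [K1 H1]. intros; apply H; lia. destruct (H m ltac:(lia)) as [K2 H2].
  exists (fun l => if Nat.eq_dec l m then K2 else K1 l). intros l Hl.
  destruct (Nat.eq_dec l m). subst; auto. apply H1; lia. Qed.

Lemma l1_cv n (z : nat -> vec) c : (forall l, (l < n)%nat -> Un_cv (fun k => z k l) (c l)) ->
  Un_cv (fun k => l1 n (vsub (z k) c)) 0.
Proof. intros H. unfold l1, vsub. replace 0 with (fsum n (fun _ => 0)) by apply fsum_zero. apply cv_fsum.
  intros l Hl. apply cv_abs0. apply cv_sub0. auto. Qed.

Lemma cv_dot m (u w : nat -> vec) U W : (forall l, (l < m)%nat -> Un_cv (fun k => u k l) (U l)) ->
  (forall l, (l < m)%nat -> Un_cv (fun k => w k l) (W l)) -> Un_cv (fun k => dot m (u k) (w k)) (dot m U W).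
Proof. intros H1 H2. unfold dot. apply cv_fsum. intros l Hl. apply CV_mult; auto. Qed.

Lemma dot_expand d (u v y : vec) t : dot d (vsub (vadd u (vscal t v)) y) (vsub (vadd u (vscal t v)) y) =
  dot d (vsub u y) (vsub u y) + t * (2 * fsum d (fun l => (u l - y l) * v l) + t * fsum d (fun l => v l * v l)).
Proof. unfold dot, vsub, vadd, vscal. induction d; simpl. ring. rewrite IHd. ring. Qed.

Lemma dot_expand' d (u v y : vec) t : dot d (vsub (vsub u (vscal t v)) y) (vsub (vsub u (vscal t v)) y) =
  dot d (vsub u y) (vsub u y) + t * (-2 * fsum d (fun l => (u l - y l) * v l) + t * fsum d (fun l => v l * v l)).
Proof. unfold dot, vsub, vadd, vscal. induction d; simpl. ring. rewrite IHd. ring. Qed.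

Lemma dot_swap d (Dv u y : vec) : dot d Dv (vsub y u) = - fsum d (fun l => (u l - y l) * Dv l).
Proof. unfold dot, vsub. induction d; simpl. ring. rewrite IHd. ring. Qed.

Lemma dot_minus_l d (u v w : vec) : dot d u w - dot d v w = fsum d (fun l => (u l - v l) * w l).
Proof. unfold dot. induction d; simpl. ring. rewrite <- IHd. ring. Qed.

Lemma dot_minus_r d (u v w : vec) : dot d u v - dot d u w = fsum d (fun l => u l * (v l - w l)).
Proof. unfold dot. induction d; simpl. ring. rewrite <- IHd. ring. Qed.


Theorem mainTheorem8
  (N n m : nat) (HN : (0 < N)%nat)
  (f : nat -> vec -> R)                 (* f i = f^[i] *)
  (Xs : nat -> vec -> Prop)             (* Xs i = X^[i] *)
  (g : vec -> vec)                      (* components g k, k < m *)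
  (rho : nat -> R)
  (a : nat -> nat -> nat -> R)          (* a k i j = a^i_j(k) *)
  (eta : R) (B : nat)
  (alpha : nat -> R)
  (x mu D : nat -> nat -> vec)          (* x i k = x^[i](k), D i k = D^[i]_x(k) *)
  (xstar mustar : vec)
  (Hf : forall i, (i < N)%nat -> convex_fun n (f i))
  (HX : forall i, (i < N)%nat -> ne_compact_convex n (Xs i))
  (Hg : forall l, (l < m)%nat -> convex_fun n (fun y => g y l))
  (Hrho : forall i, (i < N)%nat -> 0 < rho i)
  (* non-degeneracy *)
  (Heta : 0 < eta)
  (Ha_nonneg : forall k i j, (i < N)%nat -> (j < N)%nat -> 0 <= a k i j)
  (Ha_diag : forall k i, (i < N)%nat -> a k i i >= eta)
  (Ha_nd : forall k i j, (i < N)%nat -> (j < N)%nat ->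
              a k i j = 0 \/ (eta <= a k i j <= 1))
  (* double stochasticity *)
  (Ha_row : forall k i, (i < N)%nat -> fsum N (fun j => a k i j) = 1)
  (Ha_col : forall k j, (j < N)%nat -> fsum N (fun i => a k i j) = 1)
  (* periodic strong connectivity *)
  (HB : (0 < B)%nat)
  (Hconn : forall k0, strongly_connected N (union_edges N a k0 B))
  (* step sizes *)
  (Halpha_pos : forall k, 0 < alpha k)
  (Halpha_lim : Un_cv alpha 0)
  (Halpha_sum : cv_infty (fun k => sum_f_R0 alpha k))
  (Halpha_sq : exists l, Un_cv (fun k => sum_f_R0 (fun t => alpha t ^ 2) k) l)
  (* initial conditions *)
  (Hx0 : forall i, (i < N)%nat -> Xs i (x i 0%nat))
  (Hmu0 : forall i, (i < N)%nat -> is_dim m (mu i 0%nat) /\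
            forall l, (l < m)%nat -> 0 <= mu i 0%nat l)
  (* DLPDS iteration *)
  (HD : forall i k, (i < N)%nat ->
     is_dim n (D i k) /\
     is_subgrad n
       (fun y => f i y + dot m (vcomb N (a k i) (fun j => mu j k)) (g y))
       (vcomb N (a k i) (fun j => x j k)) (D i k))
  (Hx : forall i k, (i < N)%nat ->
     is_proj n (Xs i)
       (vsub (vcomb N (a k i) (fun j => x j k)) (vscal (alpha k) (D i k)))
       (x i (S k)))
  (Hmu : forall i k, (i < N)%nat ->
     is_proj m (Mball m (rho i))
       (vadd (vcomb N (a k i) (fun j => mu j k))
             (vscal (alpha k) (g (vcomb N (a k i) (fun j => x j k)))))
       (mu i (S k)))
  (* limit points *)
  (Hxstar : forall i, (i < N)%nat -> Xs i xstar)
  (Hmustar : forall i, (i < N)%nat -> Mball m (rho i) mustar)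
  (Hxlim : forall i, (i < N)%nat -> Un_cv (fun k => vnorm n (vsub (x i k) xstar)) 0)
  (Hmulim : forall i, (i < N)%nat -> Un_cv (fun k => vnorm m (vsub (mu i k) mustar)) 0)
  : forall y nu,
      (forall i, (i < N)%nat -> Xs i y) ->
      (forall i, (i < N)%nat -> Mball m (rho i) nu) ->
      Lag N n m f g xstar nu <= Lag N n m f g xstar mustar /\
      Lag N n m f g xstar mustar <= Lag N n m f g y mustar.
Proof.
  intros y nu Hy Hnu.
  assert (Hw : forall i k j, (i < N)%nat -> (j < N)%nat -> 0 <= a k i j <= 1).
  { intros i k j Hi Hj. split. auto. destruct (Ha_nd k i j Hi Hj); lra. }
  assert (Hrow : forall i k, (i < N)%nat -> fsum N (a k i) = 1) by (intros; apply Ha_row; auto).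
  assert (Hcol : forall k j, (j < N)%nat -> fsum N (fun i => a k i j) = 1) by (intros; apply Ha_col; auto).
  assert (Hxs : is_dim n xstar). { destruct (HX 0%nat HN) as [H1 _]. apply H1. apply Hxstar; auto. }
  assert (Hxd : forall i k, (i < N)%nat -> is_dim n (x i k)).
  { intros i k Hi. destruct (HX i Hi) as [H1 _]. apply H1. destruct k. auto. apply (Hx i k Hi). }
  assert (Hyd : is_dim n y). { destruct (HX 0%nat HN) as [H1 _]. apply H1. apply Hy; auto. }
  assert (Hxc : forall j l, (j < N)%nat -> (l < n)%nat -> Un_cv (fun k => x j k l) (xstar l)).
  { intros j l Hj Hl. apply cv_squeeze with (w := fun k => vnorm n (vsub (x j k) xstar)); auto.
    intros k. apply (coord_le_vnorm n (vsub (x j k) xstar) l Hl). }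
  assert (Hmc : forall j l, (j < N)%nat -> (l < m)%nat -> Un_cv (fun k => mu j k l) (mustar l)).
  { intros j l Hj Hl. apply cv_squeeze with (w := fun k => vnorm m (vsub (mu j k) mustar)); auto.
    intros k. apply (coord_le_vnorm m (vsub (mu j k) mustar) l Hl). }
  assert (Hvxc : forall i l, (i < N)%nat -> (l < n)%nat ->
     Un_cv (fun k => vcomb N (a k i) (fun j => x j k) l) (xstar l)).
  { intros i l Hi Hl. apply vcomb_cv; auto; intros; apply Hxc; auto. }
  assert (Hvmc : forall i l, (i < N)%nat -> (l < m)%nat ->
     Un_cv (fun k => vcomb N (a k i) (fun j => mu j k) l) (mustar l)).
  { intros i l Hi Hl. apply vcomb_cv; auto; intros; apply Hmc; auto. }
  assert (Hvxd : forall i k, (i < N)%nat -> is_dim n (vcomb N (a k i) (fun j => x j k))).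
  { intros i k Hi. apply vcomb_dim. intros; apply Hxd; auto. }
  assert (Hgc : forall i l, (i < N)%nat -> (l < m)%nat ->
     Un_cv (fun k => g (vcomb N (a k i) (fun j => x j k)) l) (g xstar l)).
  { intros i l Hi Hl. apply (cvx_cont n (fun z => g z l) xstar (fun k => vcomb N (a k i) (fun j => x j k))); auto; intros; apply Hvxc; auto.
    }
  assert (HNpos : 0 < INR N) by (apply lt_0_INR; auto).
  split.
  - unfold Lag.
    destruct (Rle_dec (dot m nu (g xstar)) (dot m mustar (g xstar))) as [Hok|Hlt].
    { assert (INR N * dot m nu (g xstar) <= INR N * dot m mustar (g xstar)) by (apply Rmult_le_compat_l; lra). lra. }
    exfalso.
    apply (lyap (fun k => fsum N (fun i => dot m (vsub (mu i k) nu) (vsub (mu i k) nu))) alpha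
      (fun k => fsum N (fun i => 2 * fsum m (fun l => (vcomb N (a k i) (fun j => mu j k) l - nu l) * g (vcomb N (a k i) (fun j => x j k)) l)
          + alpha k * fsum m (fun l => g (vcomb N (a k i) (fun j => x j k)) l * g (vcomb N (a k i) (fun j => x j k)) l)))
      (fsum N (fun i => 2 * fsum m (fun l => (mustar l - nu l) * g xstar l) + 0 * fsum m (fun l => g xstar l * g xstar l)))).
    + intros k. apply fsum_nonneg. intros; apply dot_nonneg.
    + auto.
    + auto.
    + apply cv_fsum. intros i Hi. apply CV_plus. apply CV_mult. apply cv_const.
      apply cv_fsum. intros l Hl. apply CV_mult. apply CV_minus. apply Hvmc; auto. apply cv_const. apply Hgc; auto.
      apply CV_mult. auto. apply cv_fsum. intros l Hl. apply CV_mult; apply Hgc; auto.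
    + rewrite fsum_const. rewrite <- dot_minus_l.
      assert (INR N * (2 * (dot m mustar (g xstar) - dot m nu (g xstar)) + 0 * fsum m (fun l => g xstar l * g xstar l)) =
              2 * (INR N * (dot m mustar (g xstar) - dot m nu (g xstar)))) by ring.
      rewrite H. assert (0 < INR N * (dot m nu (g xstar) - dot m mustar (g xstar))) by (apply Rmult_lt_0_compat; lra).
      lra.
    + intros k.
      apply Rle_trans with (fsum N (fun i => dot m (vsub (vadd (vcomb N (a k i) (fun j => mu j k)) (vscal (alpha k) (g (vcomb N (a k i) (fun j => x j k))))) nu)
                                                 (vsub (vadd (vcomb N (a k i) (fun j => mu j k)) (vscal (alpha k) (g (vcomb N (a k i) (fun j => x j k))))) nu))).
      { apply fsum_le. intros i Hi. apply proj_ineq with (C := Mball m (rho i)). apply Mball_convex. apply Hmu; auto. apply Hnu; auto. }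
      rewrite (fsum_ext N _ (fun i => dot m (vsub (vcomb N (a k i) (fun j => mu j k)) nu) (vsub (vcomb N (a k i) (fun j => mu j k)) nu) +
          alpha k * (2 * fsum m (fun l => (vcomb N (a k i) (fun j => mu j k) l - nu l) * g (vcomb N (a k i) (fun j => x j k)) l)
          + alpha k * fsum m (fun l => g (vcomb N (a k i) (fun j => x j k)) l * g (vcomb N (a k i) (fun j => x j k)) l)))).
      2:{ intros i Hi. apply dot_expand. }
      rewrite fsum_plus, fsum_scal.
      assert (Hav := avg_ineq N m (a k) (fun j => mu j k) nu (fun i j Hi Hj => Ha_nonneg k i j Hi Hj) (fun i Hi => Hrow i k Hi) (Hcol k)).
      lra.
  - assert (HDb : forall i, (i < N)%nat -> exists Bd K0, forall k, (K0 <= k)%nat ->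
        Rabs (fsum n (fun l => D i k l * D i k l)) <= Bd).
    { intros i Hi.
      destruct (cvx_bound n (f i) xstar (Hf i Hi) Hxs) as [Kfi [HKf HBf]].
      destruct (fin_choice m (fun l K => 0 <= K /\ forall w, is_dim n w -> l1 n (vsub w xstar) <= 1 ->
                 Rabs (g w l - g xstar l) <= K * l1 n (vsub w xstar))) as [Kg HKg].
      { intros l Hl. apply (cvx_bound n (fun z => g z l) xstar (Hg l Hl) Hxs). }
      destruct (cv_ev_le _ _ (1/2) (l1_cv n _ xstar (fun l Hl => Hvxc i l Hi Hl)) ltac:(lra)) as [K1 HK1].
      destruct (ev_forall m (fun l k => Rabs (vcomb N (a k i) (fun j => mu j k) l - mustar l) <= 1)) as [K2 HK2].
      { intros l Hl. apply cv_ev_le. apply Hvmc; auto. lra. }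
      set (Kb := Kfi + fsum m (fun l => (Rabs (mustar l) + 1) * Kg l)).
      exists (INR n * ((4 * Kb) * (4 * Kb))), (max K1 K2). intros k Hk.
      assert (HKb : forall w, is_dim n w -> l1 n (vsub w xstar) <= 1 ->
         Rabs ((fun z => f i z + dot m (vcomb N (a k i) (fun j => mu j k)) (g z)) w -
               (fun z => f i z + dot m (vcomb N (a k i) (fun j => mu j k)) (g z)) xstar) <= Kb).
      { intros w Hwd Hwl. cbv beta.
        replace (f i w + dot m (vcomb N (a k i) (fun j => mu j k)) (g w) - (f i xstar + dot m (vcomb N (a k i) (fun j => mu j k)) (g xstar)))
          with ((f i w - f i xstar) + (dot m (vcomb N (a k i) (fun j => mu j k)) (g w) - dot m (vcomb N (a k i) (fun j => mu j k)) (g xstar))) by ring.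
        rewrite dot_minus_r. eapply Rle_trans. apply Rabs_triang. unfold Kb. apply Rplus_le_compat.
        - eapply Rle_trans. apply HBf; auto. assert (0 <= l1 n (vsub w xstar)) by apply l1_nonneg. nra.
        - eapply Rle_trans. apply fsum_abs. apply fsum_le. intros l Hl. rewrite Rabs_mult.
          destruct (HKg l Hl) as [HKg0 HKg1]. specialize (HKg1 w Hwd Hwl).
          assert (0 <= l1 n (vsub w xstar)) by apply l1_nonneg.
          assert (Rabs (g w l - g xstar l) <= Kg l) by (eapply Rle_trans; [apply HKg1| nra]).
          assert (Rabs (vcomb N (a k i) (fun j => mu j k) l) <= Rabs (mustar l) + 1).
          { specialize (HK2 l Hl k ltac:(lia)).
            replace (vcomb N (a k i) (fun j => mu j k) l) with ((vcomb N (a k i) (fun j => mu j k) l - mustar l) + mustar l) by ring.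
            eapply Rle_trans. apply Rabs_triang. lra. }
          apply Rmult_le_compat; auto; apply Rabs_pos. }
      destruct (HD i k Hi) as [HDd HDs].
      assert (Hsb := sg_bound n _ xstar _ (D i k) Kb Hxs (Hvxd i k Hi) HDs).
      assert (Hl12 : l1 n (vsub (vcomb N (a k i) (fun j => x j k)) xstar) <= 1/2).
      { specialize (HK1 k ltac:(lia)). rewrite Rminus_0_r in HK1. eapply Rle_trans. apply Rle_abs. auto. }
      specialize (Hsb Hl12 HKb).
      rewrite Rabs_right. 2:{ apply Rle_ge. apply fsum_nonneg. intros; apply sqnn. }
      rewrite <- fsum_const. apply fsum_le. intros l Hl. specialize (Hsb l Hl). apply rabs_inv in Hsb. nra. }
    unfold Lag.
    destruct (Rle_dec (fsum N (fun i => f i xstar) + INR N * dot m mustar (g xstar)) (fsum N (fun i => f i y) + INR N * dot m mustar (g y))) as [Hok|Hlt]; auto.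
    exfalso.
    apply (lyap (fun k => fsum N (fun i => dot n (vsub (x i k) y) (vsub (x i k) y))) alpha
      (fun k => fsum N (fun i => -2 * ((f i (vcomb N (a k i) (fun j => x j k)) + dot m (vcomb N (a k i) (fun j => mu j k)) (g (vcomb N (a k i) (fun j => x j k))))
                                       - (f i y + dot m (vcomb N (a k i) (fun j => mu j k)) (g y)))
          + alpha k * fsum n (fun l => D i k l * D i k l)))
      (fsum N (fun i => -2 * ((f i xstar + dot m mustar (g xstar)) - (f i y + dot m mustar (g y))) + 0))).
    + intros k. apply fsum_nonneg. intros; apply dot_nonneg.
    + auto.
    + auto.
    + apply cv_fsum. intros i Hi. apply CV_plus. apply CV_mult. apply cv_const. apply CV_minus.
      * apply CV_plus. apply (cvx_cont n (f i) xstar (fun k => vcomb N (a k i) (fun j => x j k))); auto; intros; apply Hvxc; auto.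
        apply cv_dot. intros; apply Hvmc; auto. intros; apply Hgc; auto.
      * apply CV_plus. apply cv_const. apply cv_dot. intros; apply Hvmc; auto. intros; apply cv_const.
      * destruct (HDb i Hi) as [Bd [K0 HB0]]. apply (cv_bounded_null _ _ Bd K0); auto.
    + rewrite (fsum_ext N _ (fun i => -2 * (f i xstar - f i y) + (-2 * (dot m mustar (g xstar) - dot m mustar (g y))))) by (intros; ring).
      rewrite fsum_plus, fsum_scal, fsum_minus, fsum_const. lra.
    + intros k.
      apply Rle_trans with (fsum N (fun i => dot n (vsub (vsub (vcomb N (a k i) (fun j => x j k)) (vscal (alpha k) (D i k))) y)
                                                 (vsub (vsub (vcomb N (a k i) (fun j => x j k)) (vscal (alpha k) (D i k))) y))).
      { apply fsum_le. intros i Hi. apply proj_ineq with (C := Xs i). apply (HX i Hi). apply Hx; auto. apply Hy; auto. }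
      apply Rle_trans with (fsum N (fun i => dot n (vsub (vcomb N (a k i) (fun j => x j k)) y) (vsub (vcomb N (a k i) (fun j => x j k)) y)) +
         alpha k * fsum N (fun i => -2 * ((f i (vcomb N (a k i) (fun j => x j k)) + dot m (vcomb N (a k i) (fun j => mu j k)) (g (vcomb N (a k i) (fun j => x j k))))
                                       - (f i y + dot m (vcomb N (a k i) (fun j => mu j k)) (g y)))
          + alpha k * fsum n (fun l => D i k l * D i k l))).
      { rewrite <- fsum_scal, <- fsum_plus. apply fsum_le. intros i Hi. rewrite dot_expand'.
        destruct (HD i k Hi) as [HDd HDs]. specialize (HDs y Hyd). rewrite dot_swap in HDs.
        assert (Hak := Halpha_pos k).
        assert (alpha k * (-2 * fsum n (fun l => (vcomb N (a k i) (fun j => x j k) l - y l) * D i k l)) <=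
                alpha k * (-2 * ((f i (vcomb N (a k i) (fun j => x j k)) + dot m (vcomb N (a k i) (fun j => mu j k)) (g (vcomb N (a k i) (fun j => x j k))))
                                       - (f i y + dot m (vcomb N (a k i) (fun j => mu j k)) (g y))))).
        { apply Rmult_le_compat_l. lra. lra. }
        lra. }
      assert (Hav := avg_ineq N n (a k) (fun j => x j k) y (fun i j Hi Hj => Ha_nonneg k i j Hi Hj) (fun i Hi => Hrow i k Hi) (Hcol k)).
      lra.
Qed.
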